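(* Let $T$ be a perfect binary tree with $n\ge2$ nodes and nonnegative node weights $(x_v)$, let $1\le k\le n$, $\epsilon>0$, and $\mathrm{OPT}=\min_{\Omega\in\mathbb{T}_k}\sum_{v\notin\Omega}x_v$. Let $W>0$ satisfy $\mathrm{OPT}\le W\le \log_2 n\cdot\mathrm{OPT}$. Define $\hat x_v=\lceil x_v n\log_2 n/(\epsilon W)\rceil$ if $x_v\le W$ and $\hat x_v=\lceil n\log_2 n/\epsilon\rceil+n$ if $x_v>W$. Let $\hat\Omega\in\mathbb{T}_k$ minimize $\sum_{v\notin\Omega}\hat x_v$ over $\Omega\in\mathbb{T}_k$. Then $\sum_{v\notin\hat\Omega}x_v\le(1+\epsilon)\mathrm{OPT}$.
   Context: $\mathbb{T}_k$ denotes the family of node sets $\Omega\subseteq T$ that contain the root, are closed under taking parents, and satisfy $|\Omega|\le k$. *)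

(* Defs.v *)
From Stdlib Require Import Reals ZArith Arith List.
Open Scope R_scope.

(* Nodes of a tree with n nodes are 0..n-1 in heap order:
   root is 0, children of i are 2i+1 and 2i+2, parent of i>=1 is (i-1)/2. *)
Definition parent (i : nat) : nat := ((i - 1) / 2)%nat.

Definition perfect_size (n : nat) : Prop := exists h : nat, n = (2 ^ (S h) - 1)%nat.

Definition in_Tk (n k : nat) (Om : nat -> bool) : Prop :=
  (forall i, Om i = true -> (i < n)%nat) /\
  Om 0%nat = true /\
  (forall i, Om i = true -> Om (parent i) = true) /\
  (length (filter Om (seq 0 n)) <= k)%nat.

Definition cost (n : nat) (w : nat -> R) (Om : nat -> bool) : R :=
  fold_right Rplus 0 (map (fun i => if Om i then 0 else w i) (seq 0 n)).

Definition Rceil (x : R) : Z := (1 - up (- x))%Z.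

Definition log2 (x : R) : R := ln x / ln 2.

Definition xhat (n : nat) (eps W : R) (x : nat -> R) (v : nat) : R :=
  if Rle_dec (x v) W
  then IZR (Rceil (x v * INR n * log2 (INR n) / (eps * W)))
  else IZR (Rceil (INR n * log2 (INR n) / eps)) + INR n.

(* Main.v *)
Require Import Defs.
From Stdlib Require Import Reals ZArith Arith List Lra Lia.
Open Scope R_scope.

Definition FS (l : list nat) (f : nat -> R) : R := fold_right Rplus 0 (map f l).

Lemma FS_le l f g : (forall i, In i l -> f i <= g i) -> FS l f <= FS l g.
Proof.
  induction l as [|a l IH]; unfold FS in *; simpl; intros H; [lra|].
  unfold FS in *; simpl. assert (f a <= g a) by (apply H; auto).
  assert (fold_right Rplus 0 (map f l) <= fold_right Rplus 0 (map g l)) by (apply IH; auto).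
  lra.
Qed.

Lemma FS_lt l f g : l <> nil -> (forall i, In i l -> f i < g i) -> FS l f < FS l g.
Proof.
  induction l as [|a l IH]; intros Hn H; [congruence|].
  unfold FS in *; simpl. assert (f a < g a) by (apply H; simpl; auto).
  destruct l as [|b l'].
  - simpl. lra.
  - assert (fold_right Rplus 0 (map f (b :: l')) < fold_right Rplus 0 (map g (b :: l'))).
    { apply IH; [congruence| intros; apply H; simpl; auto]. }
    lra.
Qed.

Lemma FS_ext l f g : (forall i, In i l -> f i = g i) -> FS l f = FS l g.
Proof.
  intros H; apply Rle_antisym; apply FS_le; intros i Hi; rewrite (H i Hi); lra.
Qed.

Lemma FS_plus1 l f : FS l (fun i => f i + 1) = FS l f + INR (length l).
Proof.
  induction l as [|a l IH]; unfold FS in *; simpl; [lra|].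
  rewrite IH. destruct (length l); simpl; lra.
Qed.

Lemma FS_scale l c f : FS l (fun i => c * f i) = c * FS l f.
Proof.
  induction l as [|a l IH]; unfold FS in *; simpl; [lra|]. rewrite IH; lra.
Qed.

Lemma FS_nonneg_term l f v : In v l -> (forall i, In i l -> 0 <= f i) -> f v <= FS l f.
Proof.
  induction l as [|a l IH]; unfold FS in *; simpl; intros Hv H; [contradiction|].
  assert (0 <= fold_right Rplus 0 (map f l)).
  { assert (E0 : FS l (fun _ => 0) = 0) by (clear; induction l; unfold FS in *; simpl; lra).
    assert (FS l (fun _ => 0) <= FS l f) by (apply FS_le; intros; apply H; auto).
    unfold FS in *; lra. }
  destruct Hv as [<-|Hv].
  - lra.
  - assert (f v <= fold_right Rplus 0 (map f l)) by (apply IH; auto).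
    assert (0 <= f a) by (apply H; auto). lra.
Qed.

Lemma ceil_spec y : y <= IZR (Rceil y) < y + 1.
Proof.
  unfold Rceil. rewrite minus_IZR. destruct (archimed (- y)) as [H1 H2]. simpl. lra.
Qed.

Theorem lemma13 (n k : nat) (x : nat -> R) (eps W OPT : R) (Omhat : nat -> bool)
  (hperf : perfect_size n) (hn : (2 <= n)%nat)
  (hx : forall v, (v < n)%nat -> 0 <= x v)
  (hk1 : (1 <= k)%nat) (hkn : (k <= n)%nat) (heps : 0 < eps)
  (hOPT_att : exists Om, in_Tk n k Om /\ cost n x Om = OPT)
  (hOPT_min : forall Om, in_Tk n k Om -> OPT <= cost n x Om)
  (hW : 0 < W) (hW1 : OPT <= W) (hW2 : W <= log2 (INR n) * OPT)
  (hOmhat : in_Tk n k Omhat)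
  (hOmhat_min : forall Om, in_Tk n k Om ->
      cost n (xhat n eps W x) Omhat <= cost n (xhat n eps W x) Om) :
  cost n x Omhat <= (1 + eps) * OPT.
Proof.
  assert (HnR : 2 <= INR n) by (change 2 with (INR 2); apply le_INR; exact hn).
  assert (HL : 0 < log2 (INR n)).
  { unfold log2. apply Rdiv_lt_0_compat.
    - rewrite <- ln_1. apply ln_increasing; lra.
    - rewrite <- ln_1. apply ln_increasing; lra. }
  set (L := log2 (INR n)) in *.
  set (M := INR n * L / (eps * W)).
  assert (HM : 0 < M).
  { unfold M. apply Rdiv_lt_0_compat; [nra| nra]. }
  assert (Hlight : forall v, x v <= W -> x v * M <= xhat n eps W x v < x v * M + 1).
  { intros v Hv. unfold xhat. destruct (Rle_dec (x v) W); [|contradiction].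
    fold L. replace (x v * INR n * L / (eps * W)) with (x v * M) by (unfold M; field; lra).
    apply ceil_spec. }
  assert (Hheavy : forall v, ~ x v <= W -> W * M + INR n <= xhat n eps W x v).
  { intros v Hv. unfold xhat. destruct (Rle_dec (x v) W); [contradiction|].
    replace (W * M) with (INR n * L / eps) by (unfold M; field; lra).
    pose proof (ceil_spec (INR n * L / eps)). fold L. lra. }
  assert (Hnn : forall v, (v < n)%nat -> 0 <= xhat n eps W x v).
  { intros v Hv. destruct (Rle_dec (x v) W) as [h|h].
    - pose proof (Hlight v h). pose proof (hx v Hv). nra.
    - pose proof (Hheavy v h). pose proof (pos_INR n). nra. }
  destruct hOPT_att as [Os [HOs HcOs]].
  assert (Hseq : forall i, In i (seq 0 n) -> (i < n)%nat).
  { intros i Hi. apply in_seq in Hi. lia. }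
  (* excluded nodes of Os are light *)
  assert (HOsl : forall v, (v < n)%nat -> Os v = false -> x v <= OPT).
  { intros v Hv Hf. rewrite <- HcOs. unfold cost.
    change (x v <= FS (seq 0 n) (fun i => if Os i then 0 else x i)).
    pose proof (FS_nonneg_term (seq 0 n) (fun i => if Os i then 0 else x i) v) as P.
    cbv beta in P. rewrite Hf in P. apply P.
    - apply in_seq; lia.
    - intros i Hi. destruct (Os i); [lra| apply hx; auto]. }
  assert (Hstar : cost n (xhat n eps W x) Os < M * OPT + INR n).
  { unfold cost.
    change (FS (seq 0 n) (fun i => if Os i then 0 else xhat n eps W x i) < M * OPT + INR n).
    apply Rlt_le_trans with
      (FS (seq 0 n) (fun i => (fun j => M * (if Os j then 0 else x j)) i + 1)).
    - apply FS_lt.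
      + destruct n; [lia|]. simpl. congruence.
      + intros i Hi. specialize (Hseq i Hi). destruct (Os i) eqn:E.
        * lra.
        * assert (x i <= W) by (pose proof (HOsl i Hseq E); lra).
          pose proof (Hlight i H). lra.
    - rewrite FS_plus1, FS_scale, seq_length. unfold FS. unfold cost in HcOs.
      rewrite HcOs. lra. }
  assert (Hcont : forall v, (v < n)%nat -> ~ x v <= W -> Omhat v = true).
  { intros v Hv Hh. destruct (Omhat v) eqn:E; auto. exfalso.
    pose proof (hOmhat_min Os HOs).
    assert (xhat n eps W x v <= cost n (xhat n eps W x) Omhat).
    { unfold cost.
      change (xhat n eps W x v <= FS (seq 0 n) (fun i => if Omhat i then 0 else xhat n eps W x i)).
      pose proof (FS_nonneg_term (seq 0 n) (fun i => if Omhat i then 0 else xhat n eps W x i) v) as P.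
      cbv beta in P. rewrite E in P. apply P.
      - apply in_seq; lia.
      - intros i Hi. destruct (Omhat i); [lra| apply Hnn; auto]. }
    pose proof (Hheavy v Hh). nra. }
  assert (Hmain : M * cost n x Omhat < M * OPT + INR n).
  { apply Rle_lt_trans with (cost n (xhat n eps W x) Omhat).
    - unfold cost. change (M * FS (seq 0 n) (fun i => if Omhat i then 0 else x i) <=
        FS (seq 0 n) (fun i => if Omhat i then 0 else xhat n eps W x i)).
      rewrite <- FS_scale. apply FS_le. intros i Hi. specialize (Hseq i Hi).
      destruct (Omhat i) eqn:E; [lra|].
      destruct (Rle_dec (x i) W) as [h|h].
      + pose proof (Hlight i h). lra.
      + rewrite (Hcont i Hseq h) in E. discriminate.
    - pose proof (hOmhat_min Os HOs). lra. }
  destruct (Rle_dec (cost n x Omhat) ((1 + eps) * OPT)) as [ok|bad]; auto.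
  exfalso.
  assert (HME : M * (eps * OPT) = INR n * (L * OPT) / W) by (unfold M; field; lra).
  assert (INR n <= INR n * (L * OPT) / W).
  { apply Rmult_le_reg_r with W; [lra|].
    replace (INR n * (L * OPT) / W * W) with (INR n * (L * OPT)) by (field; lra).
    nra. }
  assert (M * (eps * OPT) < M * (cost n x Omhat - OPT)).
  { apply Rmult_lt_compat_l; [lra|lra]. }
  lra.
Qed.
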